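(* Let $N\ge 2$ and let $f:\mathbb{C}\to\mathbb{C}^N$ be a holomorphic map whose components are polynomials in $\zeta$ and are linearly independent over $\mathbb{C}$. Define $P_+^0 f=f$, $P_+^{k+1}f=P_+(P_+^k f)$, where $P_+ g=\partial g-g\,\frac{g^\dagger\cdot\partial g}{g^\dagger\cdot g}$ and $\partial=\partial/\partial\zeta$, $\bar\partial=\partial/\partial\bar\zeta$. For $k=0,\dots,N-1$ let $P_k=\frac{P_+^k f\otimes (P_+^k f)^\dagger}{|P_+^k f|^2}$ (defined wherever $P_+^kf\neq 0$). Let $\alpha_0,\dots,\alpha_{N-2}$ be real constants and $\mathbb{P}=\sum_{k=0}^{N-2}\alpha_k P_k$. Then, wherever all these projectors are defined, $$g_{++}:=\operatorname{tr}(\partial\mathbb{P}\,\partial\mathbb{P})=0,\qquad g_{--}:=\operatorname{tr}(\bar\partial\mathbb{P}\,\bar\partial\mathbb{P})=0,$$ i.e. the metric on the surface described by $\mathbb{P}$ (with components $g_{++}$, $g_{+-}=\operatorname{tr}(\partial\mathbb{P}\,\bar\partial\mathbb{P})$, $g_{--}$) has only the mixed component $g_{+-}$ possibly nonzero.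
   Context: Here $\zeta=\zeta_1+i\zeta_2$ is the complex coordinate on the plane obtained from $S^2$ by stereographic projection, $\dagger$ denotes Hermitian conjugation, $g^\dagger\cdot h=\sum_i \bar g^i h^i$, and $|g|^2=g^\dagger\cdot g$. The vectors $P_+^k f$ describe harmonic maps $S^2\to CP^{N-1}$; $\mathbb{P}$ is a Hermitian $N\times N$ matrix-valued function of $(\zeta,\bar\zeta)$, whose real and imaginary parts of entries define a surface in $\mathbb{R}^{N^2-1}$ with induced metric components $g_{++}=\operatorname{tr}(\partial\mathbb{P}\partial\mathbb{P})$, $g_{+-}=\operatorname{tr}(\partial\mathbb{P}\bar\partial\mathbb{P})$, $g_{--}=\overline{g_{++}}$. *)

(* Defs.v *)
From Stdlib Require Import Reals.
From Coquelicot Require Import Coquelicot.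
Open Scope C_scope.

Fixpoint csum (n : nat) (F : nat -> C) : C :=
  match n with O => 0 | S m => csum m F + F m end.

Fixpoint cpow (z : C) (m : nat) : C :=
  match m with O => 1 | S k => z * cpow z k end.

Definition dx (h : C -> C) (z : C) : C :=
  (Derive (fun t => fst (h (t, snd z))) (fst z),
   Derive (fun t => snd (h (t, snd z))) (fst z)).
Definition dy (h : C -> C) (z : C) : C :=
  (Derive (fun t => fst (h (fst z, t))) (snd z),
   Derive (fun t => snd (h (fst z, t))) (snd z)).

Definition wd (h : C -> C) (z : C) : C := (dx h z - Ci * dy h z) / 2.
Definition wdbar (h : C -> C) (z : C) : C := (dx h z + Ci * dy h z) / 2.

Definition vfun := C -> nat -> C.

Definition herm (N : nat) (g h : nat -> C) : C :=
  csum N (fun i => Cconj (g i) * h i).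

Definition vwd (g : vfun) : vfun := fun z j => wd (fun w => g w j) z.

Definition Pplus (N : nat) (g : vfun) : vfun :=
  fun z j => vwd g z j - g z j * (herm N (g z) (vwd g z) / herm N (g z) (g z)).

Fixpoint Pplus_iter (N : nat) (k : nat) (f : vfun) : vfun :=
  match k with O => f | S k' => Pplus N (Pplus_iter N k' f) end.

Definition proj (N : nat) (k : nat) (f : vfun) : C -> nat -> nat -> C :=
  fun z i j => let g := Pplus_iter N k f z in
    g i * Cconj (g j) / herm N g g.

Definition bigP (N : nat) (alpha : nat -> R) (f : vfun) : C -> nat -> nat -> C :=
  fun z i j => csum (N - 1) (fun k => RtoC (alpha k) * proj N k f z i j).

Definition mwd (M : C -> nat -> nat -> C) : C -> nat -> nat -> C :=
  fun z i j => wd (fun w => M w i j) z.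
Definition mwdbar (M : C -> nat -> nat -> C) : C -> nat -> nat -> C :=
  fun z i j => wdbar (fun w => M w i j) z.

Definition trmul (N : nat) (A B : nat -> nat -> C) : C :=
  csum N (fun i => csum N (fun j => A i j * B j i)).

Definition polynomial_components (N : nat) (f : vfun) : Prop :=
  exists (D : nat) (c : nat -> nat -> C),
    forall (j : nat) (z : C), (j < N)%nat ->
      f z j = csum (S D) (fun m => c j m * cpow z m).

Definition lin_indep_components (N : nat) (f : vfun) : Prop :=
  forall a : nat -> C,
    (forall z : C, csum N (fun j => a j * f z j) = 0) ->
    forall j, (j < N)%nat -> a j = 0.

(* Main.v *)
Require Import Defs.
From Stdlib Require Import Reals Lra Lia.
From Coquelicot Require Import Coquelicot.
Open Scope C_scope.

Lemma dR_const (c x : R) : is_derive (fun _ : R => c) x 0%R.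
Proof. exact (is_derive_const c x). Qed.
Lemma dR_id (x : R) : is_derive (fun t : R => t) x 1%R.
Proof. exact (is_derive_id x). Qed.
Lemma dR_plus (f g : R -> R) (x df dg : R) : is_derive f x df -> is_derive g x dg ->
  is_derive (fun t => (f t + g t)%R) x (df + dg)%R.
Proof. intros. exact (is_derive_plus f g x df dg H H0). Qed.
Lemma dR_minus (f g : R -> R) (x df dg : R) : is_derive f x df -> is_derive g x dg ->
  is_derive (fun t => (f t - g t)%R) x (df - dg)%R.
Proof. intros. exact (is_derive_minus f g x df dg H H0). Qed.
Lemma dR_opp (f : R -> R) (x df : R) : is_derive f x df -> is_derive (fun t => (- f t)%R) x (- df)%R.
Proof. intros. exact (is_derive_opp f x df H). Qed.
Lemma dR_mult (f g : R -> R) (x df dg : R) : is_derive f x df -> is_derive g x dg ->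
  is_derive (fun t => (f t * g t)%R) x (df * g x + f x * dg)%R.
Proof. intros. exact (is_derive_mult f g x df dg H H0 Rmult_comm). Qed.
Lemma dR_eq (f : R -> R) (x d d' : R) : is_derive f x d -> d = d' -> is_derive f x d'.
Proof. intros H ->; exact H. Qed.

Definition CD (h : R -> C) (x : R) (d : C) : Prop :=
  is_derive (fun t => fst (h t)) x (fst d) /\ is_derive (fun t => snd (h t)) x (snd d).

Lemma CD_eq h x d d' : CD h x d -> d = d' -> CD h x d'.
Proof. intros H ->; exact H. Qed.

Lemma CD_const (c : C) x : CD (fun _ => c) x 0.
Proof. split; simpl; apply dR_const. Qed.

Lemma CD_add h1 h2 x d1 d2 : CD h1 x d1 -> CD h2 x d2 -> CD (fun t => h1 t + h2 t) x (d1 + d2).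
Proof. intros [a b] [c d]; split; simpl; apply dR_plus; auto. Qed.

Lemma CD_opp h x d : CD h x d -> CD (fun t => - h t) x (- d).
Proof. intros [a b]; split; simpl; apply dR_opp; auto. Qed.

Lemma CD_mul h1 h2 x d1 d2 : CD h1 x d1 -> CD h2 x d2 ->
  CD (fun t => h1 t * h2 t) x (d1 * h2 x + h1 x * d2).
Proof.
  intros [a b] [c d]; split; simpl.
  - eapply dR_eq. apply dR_minus; apply dR_mult; eauto. simpl; ring.
  - eapply dR_eq. apply dR_plus; apply dR_mult; eauto. simpl; ring.
Qed.

Lemma CD_conj h x d : CD h x d -> CD (fun t => Cconj (h t)) x (Cconj d).
Proof. intros [a b]; split; simpl; auto. apply dR_opp; auto. Qed.

Lemma C_neq0 (z : C) : z <> 0 -> (fst z ^ 2 + snd z ^ 2)%R <> 0%R.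
Proof.
  destruct z as [a b]; simpl; intros H E. apply H.
  assert (a = 0%R) by nra. assert (b = 0%R) by nra. subst. reflexivity.
Qed.

Lemma CD_inv h x d : CD h x d -> h x <> 0 ->
  CD (fun t => / h t) x (- (d * (/ h x * / h x))).
Proof.
  intros [a b] Hn. pose proof (C_neq0 _ Hn) as Hq.
  assert (Dq : is_derive (fun t => (fst (h t) ^ 2 + snd (h t) ^ 2)%R) x
     (2 * fst (h x) * fst d + 2 * snd (h x) * snd d)%R).
  { eapply dR_eq. apply dR_plus.
    - apply (is_derive_ext (fun t => fst (h t) * fst (h t))%R). intro; simpl; ring.
      apply dR_mult; eauto.
    - apply (is_derive_ext (fun t => snd (h t) * snd (h t))%R). intro; simpl; ring.
      apply dR_mult; eauto.
    - cbv beta; ring. }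
  split.
  - eapply dR_eq. apply (is_derive_div (fun t => fst (h t))). exact a. exact Dq. exact Hq.
    cbv beta. simpl. simpl in Hq. rewrite !Rmult_1_r in *. field. exact Hq.
  - eapply dR_eq. apply (is_derive_div (fun t => - snd (h t))%R). apply dR_opp; exact b. exact Dq. exact Hq.
    cbv beta. simpl. simpl in Hq. rewrite !Rmult_1_r in *. field. exact Hq.
Qed.

Inductive ex : Type :=
| Cst : C -> ex | Zv : ex | Zbv : ex
| Add : ex -> ex -> ex | Mul : ex -> ex -> ex | Opp : ex -> ex | Inv : ex -> ex.

Fixpoint eval (e : ex) (u : C) : C :=
  match e with
  | Cst c => c | Zv => u | Zbv => Cconj u
  | Add a b => eval a u + eval b u
  | Mul a b => eval a u * eval b u
  | Opp a => - eval a u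
  | Inv a => / eval a u
  end.

Fixpoint ok (e : ex) (u : C) : Prop :=
  match e with
  | Add a b => ok a u /\ ok b u
  | Mul a b => ok a u /\ ok b u
  | Opp a => ok a u
  | Inv a => ok a u /\ eval a u <> 0
  | _ => True
  end.

Fixpoint dz (e : ex) : ex :=
  match e with
  | Cst _ => Cst 0 | Zv => Cst 1 | Zbv => Cst 0
  | Add a b => Add (dz a) (dz b)
  | Mul a b => Add (Mul (dz a) b) (Mul a (dz b))
  | Opp a => Opp (dz a)
  | Inv a => Opp (Mul (dz a) (Mul (Inv a) (Inv a)))
  end.

Fixpoint dzb (e : ex) : ex :=
  match e with
  | Cst _ => Cst 0 | Zv => Cst 0 | Zbv => Cst 1
  | Add a b => Add (dzb a) (dzb b)
  | Mul a b => Add (Mul (dzb a) b) (Mul a (dzb b))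
  | Opp a => Opp (dzb a)
  | Inv a => Opp (Mul (dzb a) (Mul (Inv a) (Inv a)))
  end.

Fixpoint cj (e : ex) : ex :=
  match e with
  | Cst c => Cst (Cconj c) | Zv => Zbv | Zbv => Zv
  | Add a b => Add (cj a) (cj b)
  | Mul a b => Mul (cj a) (cj b)
  | Opp a => Opp (cj a)
  | Inv a => Inv (cj a)
  end.

Lemma Cinv_conj' (a : C) : Cconj (/ a) = / Cconj a.
Proof.
  destruct a as [r i]. unfold Cconj, Cinv; simpl.
  replace (- i * (- i * 1))%R with (i * (i * 1))%R by ring.
  f_equal. unfold Rdiv. ring.
Qed.

Lemma Cconj_neq0 (a : C) : a <> 0 -> Cconj a <> 0.
Proof. intros H E. apply H. rewrite <- (Cconj_conj a), E. apply injective_projections; simpl; ring. Qed.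

Lemma eval_cj e u : eval (cj e) u = Cconj (eval e u).
Proof.
  induction e; simpl; rewrite ?IHe, ?IHe1, ?IHe2;
  rewrite ?Cconj_conj, ?Cplus_conj, ?Cmult_conj, ?Copp_conj, ?Cinv_conj'; reflexivity.
Qed.

Lemma ok_cj e u : ok e u -> ok (cj e) u.
Proof.
  induction e; simpl; intros H; try tauto.
  destruct H; split; auto. rewrite eval_cj. now apply Cconj_neq0.
Qed.

Lemma ok_cj_inv e u : ok (cj e) u -> ok e u.
Proof.
  induction e; simpl; intros H; try tauto.
  destruct H as [H1 H2]; split; auto. rewrite eval_cj in H2. intro E; apply H2. rewrite E.
  apply injective_projections; simpl; ring.
Qed.

Lemma ok_dz e u : ok e u -> ok (dz e) u.
Proof. induction e; simpl; intuition. Qed.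
Lemma ok_dzb e u : ok e u -> ok (dzb e) u.
Proof. induction e; simpl; intuition. Qed.

Lemma dz_dzb e u : ok e u -> eval (dz (dzb e)) u = eval (dzb (dz e)) u.
Proof.
  induction e; simpl; intros; try reflexivity.
  - destruct H. rewrite IHe1, IHe2; auto.
  - destruct H. rewrite IHe1, IHe2; auto. ring.
  - rewrite IHe; auto.
  - destruct H. rewrite IHe; auto. field. auto.
Qed.

Lemma Cconj_0 : Cconj 0 = 0.
Proof. apply injective_projections; simpl; ring. Qed.
Lemma Cconj_1 : Cconj 1 = 1.
Proof. apply injective_projections; simpl; ring. Qed.

Lemma dz_cj e u : eval (dz (cj e)) u = Cconj (eval (dzb e) u).
Proof.
  induction e; simpl; rewrite ?IHe, ?IHe1, ?IHe2, ?eval_cj;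
  repeat first [rewrite Cplus_conj | rewrite Cmult_conj | rewrite Copp_conj | rewrite Cinv_conj'
    | rewrite Cconj_0 | rewrite Cconj_1]; reflexivity.
Qed.

Lemma dzb_cj e u : eval (dzb (cj e)) u = Cconj (eval (dz e) u).
Proof.
  induction e; simpl; rewrite ?IHe, ?IHe1, ?IHe2, ?eval_cj;
  repeat first [rewrite Cplus_conj | rewrite Cmult_conj | rewrite Copp_conj | rewrite Cinv_conj'
    | rewrite Cconj_0 | rewrite Cconj_1]; reflexivity.
Qed.

Lemma CD_eval e (p : R -> C) x dp : CD p x dp -> ok e (p x) ->
  CD (fun t => eval e (p t)) x (eval (dz e) (p x) * dp + eval (dzb e) (p x) * Cconj dp).
Proof.
  intros Hp. induction e; simpl; intros Hok.
  - eapply CD_eq. apply CD_const. ring.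
  - eapply CD_eq. exact Hp. ring.
  - eapply CD_eq. apply CD_conj; exact Hp. ring.
  - destruct Hok. eapply CD_eq. apply CD_add; [apply IHe1 | apply IHe2]; auto. simpl. ring.
  - destruct Hok. eapply CD_eq. apply CD_mul; [apply IHe1 | apply IHe2]; auto. simpl. ring.
  - eapply CD_eq. apply CD_opp; apply IHe; auto. simpl. ring.
  - destruct Hok. eapply CD_eq. apply CD_inv; [apply IHe|]; auto. simpl. field. auto.
Qed.

Lemma loc_nz (f : R -> R) x l : is_derive f x l -> f x <> 0%R -> locally x (fun t => f t <> 0%R).
Proof.
  intros H Hn.
  pose proof (ex_derive_continuous (K:=R_AbsRing) (V:=R_NormedModule) f x (ex_intro _ l H)) as Hc.
  apply (Hc (fun y : R => y <> 0%R)).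
  assert (Hp : (0 < Rabs (f x))%R) by (apply Rabs_pos_lt; auto).
  exists (mkposreal _ Hp). intros y Hy E. subst y.
  unfold ball in Hy; simpl in Hy. unfold AbsRing_ball in Hy. simpl in Hy.
  unfold abs, minus, plus, opp in Hy; simpl in Hy.
  rewrite Rplus_0_l, Rabs_Ropp in Hy. lra.
Qed.

Lemma loc_nzC h x d : CD h x d -> h x <> 0 -> locally x (fun t => h t <> 0).
Proof.
  intros [Ha Hb] Hn.
  destruct (Req_dec (fst (h x)) 0%R) as [E|E].
  - assert (snd (h x) <> 0%R).
    { intro E2. apply Hn. apply injective_projections; simpl; auto. }
    eapply filter_imp; [| apply (loc_nz _ _ _ Hb H)].
    intros t Ht Z. apply Ht. rewrite Z. reflexivity.
  - eapply filter_imp; [| apply (loc_nz _ _ _ Ha E)].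
    intros t Ht Z. apply Ht. rewrite Z. reflexivity.
Qed.

Lemma ok_loc e p x dp : CD p x dp -> ok e (p x) -> locally x (fun t => ok e (p t)).
Proof.
  intros Hp. induction e; simpl; intros Hok.
  all: try (apply filter_forall; intros; exact I).
  - destruct Hok. apply filter_and; auto.
  - destruct Hok. apply filter_and; auto.
  - auto.
  - destruct Hok. apply filter_and; auto.
    apply (loc_nzC (fun t => eval e (p t)) x _ (CD_eval e p x dp Hp H) H0).
Qed.

Lemma CD_line1 (x y : R) : CD (fun t => (t, y)) x 1.
Proof. split; simpl. apply dR_id. apply dR_const. Qed.
Lemma CD_line2 (x y : R) : CD (fun t => (x, t)) y Ci.
Proof. split; simpl. apply dR_const. apply dR_id. Qed.

Definition lineok (P : C -> Prop) (u : C) : Prop :=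
  locally (fst u) (fun t => P (t, snd u)) /\ locally (snd u) (fun t => P (fst u, t)).

Lemma ok_lineok e u : ok e u -> lineok (ok e) u.
Proof.
  destruct u as [x y]; intros H; split; simpl.
  - exact (ok_loc e (fun t => (t, y)) x 1 (CD_line1 x y) H).
  - exact (ok_loc e (fun t => (x, t)) y Ci (CD_line2 x y) H).
Qed.

Lemma dxdy_eval e u : ok e u ->
  dx (eval e) u = eval (dz e) u * 1 + eval (dzb e) u * Cconj 1 /\
  dy (eval e) u = eval (dz e) u * Ci + eval (dzb e) u * Cconj Ci.
Proof.
  destruct u as [x y]; intros H.
  destruct (CD_eval e (fun t => (t, y)) x 1 (CD_line1 x y) H) as [H1 H2].
  destruct (CD_eval e (fun t => (x, t)) y Ci (CD_line2 x y) H) as [H3 H4].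
  cbv beta in H1, H2, H3, H4. unfold dx, dy; simpl fst; simpl snd. split.
  - rewrite (surjective_pairing (_ * 1 + _)). f_equal; apply is_derive_unique; assumption.
  - rewrite (surjective_pairing (_ * Ci + _)). f_equal; apply is_derive_unique; assumption.
Qed.

Lemma wd_eval e u : ok e u -> wd (eval e) u = eval (dz e) u.
Proof.
  intros H. destruct (dxdy_eval e u H) as [E1 E2]. unfold wd. rewrite E1, E2.
  generalize (eval (dz e) u) (eval (dzb e) u). intros [a b] [c d].
  apply injective_projections; simpl; field.
Qed.

Lemma wdbar_eval e u : ok e u -> wdbar (eval e) u = eval (dzb e) u.
Proof.
  intros H. destruct (dxdy_eval e u H) as [E1 E2]. unfold wdbar. rewrite E1, E2.
  generalize (eval (dz e) u) (eval (dzb e) u). intros [a b] [c d].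
  apply injective_projections; simpl; field.
Qed.

Lemma dxdy_ext (F G : C -> C) u : lineok (fun w => F w = G w) u ->
  dx F u = dx G u /\ dy F u = dy G u.
Proof.
  intros [H1 H2]. unfold dx, dy. split; f_equal; apply Derive_ext_loc.
  all: first [ apply (filter_imp (fun t => F (t, snd u) = G (t, snd u))); [intros t Ht; rewrite Ht; reflexivity | exact H1]
             | apply (filter_imp (fun t => F (fst u, t) = G (fst u, t))); [intros t Ht; rewrite Ht; reflexivity | exact H2]].
Qed.

Lemma wd_ext F e u : lineok (fun w => F w = eval e w) u -> ok e u -> wd F u = eval (dz e) u.
Proof.
  intros H Hok. rewrite <- wd_eval by exact Hok.
  destruct (dxdy_ext F (eval e) u H) as [E1 E2]. unfold wd. rewrite E1, E2. reflexivity.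
Qed.

Lemma wdbar_ext F e u : lineok (fun w => F w = eval e w) u -> ok e u -> wdbar F u = eval (dzb e) u.
Proof.
  intros H Hok. rewrite <- wdbar_eval by exact Hok.
  destruct (dxdy_ext F (eval e) u H) as [E1 E2]. unfold wdbar. rewrite E1, E2. reflexivity.
Qed.

Lemma lineok_imp (P Q : C -> Prop) u : (forall w, P w -> Q w) -> lineok P u -> lineok Q u.
Proof. intros H [A B]; split; eapply filter_imp; eauto; intros; apply H; auto. Qed.

Lemma csum_ext n F G : (forall i, (i < n)%nat -> F i = G i) -> csum n F = csum n G.
Proof. induction n; simpl; intros H; auto. rewrite IHn, H; auto. Qed.
Lemma csum_plus n F G : csum n (fun i => F i + G i) = csum n F + csum n G.
Proof. induction n; simpl. ring. rewrite IHn. ring. Qed.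
Lemma csum_scal n c F : csum n (fun i => c * F i) = c * csum n F.
Proof. induction n; simpl. ring. rewrite IHn. ring. Qed.
Lemma csum_zero n : csum n (fun _ => 0) = 0.
Proof. induction n; simpl. ring. rewrite IHn. ring. Qed.
Lemma csum_conj n F : Cconj (csum n F) = csum n (fun i => Cconj (F i)).
Proof. induction n; simpl. apply Cconj_0. rewrite Cplus_conj, IHn. ring. Qed.
Lemma csum_swap n m F : csum n (fun i => csum m (fun j => F i j)) = csum m (fun j => csum n (fun i => F i j)).
Proof.
  induction n; simpl. symmetry; apply csum_zero.
  rewrite IHn. rewrite <- csum_plus. reflexivity.
Qed.

Lemma herm_ext N a a' b b' : (forall i, (i < N)%nat -> a i = a' i) -> (forall i, (i < N)%nat -> b i = b' i) ->
  herm N a b = herm N a' b'.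
Proof. intros. unfold herm. apply csum_ext. intros. rewrite H, H0; auto. Qed.
Lemma herm_conj N a b : Cconj (herm N a b) = herm N b a.
Proof. unfold herm. rewrite csum_conj. apply csum_ext. intros. rewrite Cmult_conj, Cconj_conj. ring. Qed.
Lemma herm_addl N a b c : herm N (fun i => a i + b i) c = herm N a c + herm N b c.
Proof. unfold herm. rewrite <- csum_plus. apply csum_ext. intros. rewrite Cplus_conj. ring. Qed.
Lemma herm_addr N a b c : herm N c (fun i => a i + b i) = herm N c a + herm N c b.
Proof. unfold herm. rewrite <- csum_plus. apply csum_ext. intros. ring. Qed.
Lemma herm_scall N s a c : herm N (fun i => s * a i) c = Cconj s * herm N a c.
Proof. unfold herm. rewrite <- csum_scal. apply csum_ext. intros. rewrite Cmult_conj. ring. Qed.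
Lemma herm_scalr N s a c : herm N c (fun i => s * a i) = s * herm N c a.
Proof. unfold herm. rewrite <- csum_scal. apply csum_ext. intros. ring. Qed.
Lemma herm_zerol N c : herm N (fun _ => 0) c = 0.
Proof. unfold herm. transitivity (csum N (fun _ => 0)); [apply csum_ext; intros; rewrite Cconj_0; ring | apply csum_zero]. Qed.
Lemma herm_zeror N c : herm N c (fun _ => 0) = 0.
Proof. unfold herm. transitivity (csum N (fun _ => 0)); [apply csum_ext; intros; ring | apply csum_zero]. Qed.
Lemma herm_real N a : Cconj (herm N a a) = herm N a a.
Proof. apply herm_conj. Qed.

Fixpoint csumE (n : nat) (F : nat -> ex) : ex :=
  match n with O => Cst 0 | S m => Add (csumE m F) (F m) end.

Lemma eval_csumE n F u : eval (csumE n F) u = csum n (fun i => eval (F i) u).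
Proof. induction n; simpl; auto. rewrite IHn; auto. Qed.
Lemma dz_csumE n F u : eval (dz (csumE n F)) u = csum n (fun i => eval (dz (F i)) u).
Proof. induction n; simpl; auto. rewrite IHn; auto. Qed.
Lemma dzb_csumE n F u : eval (dzb (csumE n F)) u = csum n (fun i => eval (dzb (F i)) u).
Proof. induction n; simpl; auto. rewrite IHn; auto. Qed.
Lemma ok_csumE n F u : (forall i, (i < n)%nat -> ok (F i) u) -> ok (csumE n F) u.
Proof. induction n; simpl; intros; auto. split; auto. Qed.
Lemma ok_csumE_inv n F u : ok (csumE n F) u -> forall i, (i < n)%nat -> ok (F i) u.
Proof.
  induction n; simpl; intros H i Hi. lia.
  destruct H. destruct (Nat.eq_dec i n). subst; auto. apply IHn; auto. lia.
Qed.

Definition hermE (N : nat) (a b : nat -> ex) : ex := csumE N (fun i => Mul (cj (a i)) (b i)).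

Lemma eval_hermE N a b u : eval (hermE N a b) u = herm N (fun i => eval (a i) u) (fun i => eval (b i) u).
Proof. unfold hermE, herm. rewrite eval_csumE. apply csum_ext. intros. simpl. now rewrite eval_cj. Qed.
Lemma dz_hermE N a b u : eval (dz (hermE N a b)) u =
  herm N (fun i => eval (dzb (a i)) u) (fun i => eval (b i) u) + herm N (fun i => eval (a i) u) (fun i => eval (dz (b i)) u).
Proof.
  unfold hermE, herm. rewrite dz_csumE, <- csum_plus. apply csum_ext. intros. simpl.
  now rewrite eval_cj, dz_cj.
Qed.
Lemma dzb_hermE N a b u : eval (dzb (hermE N a b)) u =
  herm N (fun i => eval (dz (a i)) u) (fun i => eval (b i) u) + herm N (fun i => eval (a i) u) (fun i => eval (dzb (b i)) u).
Proof.
  unfold hermE, herm. rewrite dzb_csumE, <- csum_plus. apply csum_ext. intros. simpl.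
  now rewrite eval_cj, dzb_cj.
Qed.
Lemma ok_hermE N a b u : (forall i, (i < N)%nat -> ok (a i) u /\ ok (b i) u) -> ok (hermE N a b) u.
Proof. intros H. apply ok_csumE. intros i Hi. simpl. destruct (H i Hi); split; auto. now apply ok_cj. Qed.
Lemma ok_hermE_inv N a b u : ok (hermE N a b) u -> forall i, (i < N)%nat -> ok (a i) u /\ ok (b i) u.
Proof.
  intros H i Hi. pose proof (ok_csumE_inv _ _ _ H i Hi) as H'. simpl in H'. destruct H'.
  split; auto. now apply ok_cj_inv.
Qed.

Lemma csum_mult n m F G : csum n F * csum m G = csum n (fun k => csum m (fun l => F k * G l)).
Proof.
  induction n; simpl. ring.
  rewrite <- IHn. rewrite csum_scal. ring.
Qed.

Lemma trmul_ext N A A' B B' : (forall i j, (i < N)%nat -> (j < N)%nat -> A i j = A' i j) ->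
  (forall i j, (i < N)%nat -> (j < N)%nat -> B i j = B' i j) -> trmul N A B = trmul N A' B'.
Proof.
  intros HA HB. unfold trmul. apply csum_ext; intros i Hi. apply csum_ext; intros j Hj.
  rewrite HA, HB; auto.
Qed.

Lemma trmul_sum N n F G : trmul N (fun i j => csum n (fun k => F k i j)) (fun i j => csum n (fun l => G l i j))
  = csum n (fun k => csum n (fun l => trmul N (F k) (G l))).
Proof.
  unfold trmul.
  transitivity (csum N (fun i => csum N (fun j => csum n (fun k => csum n (fun l => F k i j * G l j i))))).
  { apply csum_ext; intros; apply csum_ext; intros. apply csum_mult. }
  transitivity (csum N (fun i => csum n (fun k => csum N (fun j => csum n (fun l => F k i j * G l j i))))).
  { apply csum_ext; intros; apply csum_swap. }
  rewrite csum_swap. apply csum_ext; intros k _.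
  transitivity (csum N (fun i => csum n (fun l => csum N (fun j => F k i j * G l j i)))).
  { apply csum_ext; intros. apply csum_swap. }
  apply csum_swap.
Qed.

Lemma dsum_plus N F G : csum N (fun i => csum N (fun j => F i j + G i j)) =
  csum N (fun i => csum N (fun j => F i j)) + csum N (fun i => csum N (fun j => G i j)).
Proof. rewrite <- csum_plus. apply csum_ext; intros. apply csum_plus. Qed.
Lemma dsum_scal N c F : csum N (fun i => csum N (fun j => c * F i j)) = c * csum N (fun i => csum N (fun j => F i j)).
Proof. rewrite <- csum_scal. apply csum_ext; intros. apply csum_scal. Qed.

Lemma trmul_lin N c d X Y Z W :
  trmul N (fun i j => c * (X i j - Y i j)) (fun i j => d * (Z i j - W i j)) =
  c * d * (trmul N X Z - trmul N X W - trmul N Y Z + trmul N Y W).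
Proof.
  unfold trmul.
  transitivity (csum N (fun i => csum N (fun j => c*d*(X i j * Z j i) + (-(c*d))*(X i j * W j i) + (-(c*d))*(Y i j * Z j i) + c*d*(Y i j * W j i)))).
  { apply csum_ext; intros; apply csum_ext; intros; ring. }
  rewrite !dsum_plus, !dsum_scal. ring.
Qed.

Lemma trmul_zero_r N X : trmul N X (fun _ _ => 0) = 0.
Proof.
  unfold trmul. transitivity (csum N (fun _ => 0)); [|apply csum_zero].
  apply csum_ext; intros. transitivity (csum N (fun _ => 0)); [|apply csum_zero].
  apply csum_ext; intros. ring.
Qed.
Lemma trmul_zero_l N X : trmul N (fun _ _ => 0) X = 0.
Proof.
  unfold trmul. transitivity (csum N (fun _ => 0)); [|apply csum_zero].
  apply csum_ext; intros. transitivity (csum N (fun _ => 0)); [|apply csum_zero].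
  apply csum_ext; intros. ring.
Qed.

Lemma trmul_conj N A : trmul N (fun i j => Cconj (A j i)) (fun i j => Cconj (A j i)) = Cconj (trmul N A A).
Proof.
  unfold trmul. rewrite csum_conj. rewrite csum_swap. apply csum_ext; intros.
  rewrite csum_conj. apply csum_ext; intros. rewrite Cmult_conj. ring.
Qed.

Section Alg.
Variable N : nat.
Hypothesis HN : (1 <= N)%nat.
Variable E0 : nat -> ex.
Hypothesis E0ok : forall j u, ok (E0 j) u.
Hypothesis E0hol : forall j u, eval (dzb (E0 j)) u = 0.

Fixpoint E (k : nat) : nat -> ex :=
  match k with
  | O => E0
  | S k' => fun j => Add (dz (E k' j))
      (Opp (Mul (E k' j) (Mul (hermE N (E k') (fun i => dz (E k' i))) (Inv (hermE N (E k') (E k'))))))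
  end.

Local Notation H k := (hermE N (E k) (E k)).
Local Notation M k := (hermE N (E k) (fun i => dz (E k i))).

Lemma okH_S k u : ok (H (S k)) u -> ok (H k) u /\ eval (H k) u <> 0.
Proof.
  intros Hok. destruct (ok_hermE_inv _ _ _ _ Hok 0%nat ltac:(lia)) as [A _].
  simpl in A. tauto.
Qed.

Lemma ok_H_le K k u : ok (H K) u -> (k <= K)%nat -> ok (H k) u.
Proof.
  intros Hok Hle. induction Hle; auto. apply IHHle. apply (okH_S m u). auto.
Qed.

Lemma nz_H_lt K k u : ok (H K) u -> (k < K)%nat -> eval (H k) u <> 0.
Proof.
  intros Hok Hlt. apply (okH_S k u). apply (ok_H_le K); auto.
Qed.

Lemma ok_E k u j : ok (H k) u -> (j < N)%nat -> ok (E k j) u.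
Proof. intros Hok Hj. exact (proj1 (ok_hermE_inv _ _ _ _ Hok j Hj)). Qed.

Lemma ok_H_S k u : ok (H k) u -> eval (H k) u <> 0 -> ok (H (S k)) u.
Proof.
  intros Hok Hnz. apply ok_hermE. intros i Hi.
  assert (ok (E (S k) i) u).
  { simpl. repeat split; auto using ok_dz, ok_E.
    apply ok_hermE. intros; split; auto using ok_dz, ok_E. }
  auto.
Qed.

Variable K : nat.
Local Notation U u := (ok (H K) u).

Lemma dz_congr a b u : (forall w, U w -> eval a w = eval b w) -> U u -> ok a u -> ok b u ->
  eval (dz a) u = eval (dz b) u.
Proof.
  intros Hab Hu Ha Hb. rewrite <- (wd_eval a u Ha).
  apply wd_ext; auto. eapply lineok_imp; [| apply (ok_lineok _ _ Hu)]. auto.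
Qed.

Lemma dzb_congr a b u : (forall w, U w -> eval a w = eval b w) -> U u -> ok a u -> ok b u ->
  eval (dzb a) u = eval (dzb b) u.
Proof.
  intros Hab Hu Ha Hb. rewrite <- (wdbar_eval a u Ha).
  apply wdbar_ext; auto. eapply lineok_imp; [| apply (ok_lineok _ _ Hu)]. auto.
Qed.

Definition gv k u := fun j => eval (E k j) u.
Definition dgv k u := fun j => eval (dz (E k j)) u.
Definition dbgv k u := fun j => eval (dzb (E k j)) u.
Definition ddb k u := fun j => eval (dzb (dz (E k j))) u.
Definition nn k u := herm N (gv k u) (gv k u).
Definition mm k u := herm N (gv k u) (dgv k u).

Lemma eval_H k u : eval (H k) u = nn k u.
Proof. apply eval_hermE. Qed.
Lemma eval_M k u : eval (M k) u = mm k u.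
Proof. apply eval_hermE. Qed.

Lemma gv_S k u j : gv (S k) u j = dgv k u j + (- (mm k u / nn k u)) * gv k u j.
Proof.
  unfold gv at 1. simpl. rewrite eval_hermE, eval_hermE. fold (gv k u) (dgv k u).
  unfold mm, nn, gv, dgv. unfold Cdiv. ring.
Qed.

Lemma dgv_eq k u j : dgv k u j = gv (S k) u j + (mm k u / nn k u) * gv k u j.
Proof. rewrite gv_S. ring. Qed.

Lemma nn_real k u : Cconj (nn k u) = nn k u.
Proof. apply herm_real. Qed.

Definition DbE (k : nat) (j : nat) : ex :=
  match k with
  | O => Cst 0
  | S k' => Mul (Opp (Mul (H (S k')) (Inv (H k')))) (E k' j)
  end.

Definition Dbar k := forall u, U u -> forall j, (j < N)%nat -> eval (dzb (E k j)) u = eval (DbE k j) u.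
Definition Orth k := forall u, U u -> forall i, (i < k)%nat -> herm N (gv i u) (gv k u) = 0.

Lemma dbgv_val k u j : Dbar k -> U u -> (j < N)%nat ->
  dbgv k u j = match k with O => 0 | S k' => (- (nn k u / nn k' u)) * gv k' u j end.
Proof.
  intros D Hu Hj. unfold dbgv. rewrite D; auto. destruct k; unfold DbE; cbn [eval]; auto.
  rewrite !eval_H. reflexivity.
Qed.

Lemma herm_dbgv_l k u v : Dbar k -> Orth v -> U u -> (k <= v)%nat -> (k <> v \/ True) ->
  (match k with O => True | S k' => (k' < v)%nat end) ->
  herm N (dbgv k u) (gv v u) = 0.
Proof.
  intros D O Hu Hle _ Hk.
  destruct k as [|k'].
  - rewrite (herm_ext N _ (fun _ => 0) _ (gv v u)).
    apply herm_zerol. intros; apply (dbgv_val 0); auto. auto.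
  - rewrite (herm_ext N _ (fun i => (- (nn (S k') u / nn k' u)) * gv k' u i) _ (gv v u)).
    rewrite herm_scall, (O u Hu k' Hk). ring.
    intros; apply (dbgv_val (S k')); auto. auto.
Qed.

Lemma dH k u : Dbar k -> Orth k -> U u -> eval (dz (H k)) u = mm k u.
Proof.
  intros D O Hu. rewrite dz_hermE. fold (dbgv k u) (gv k u) (dgv k u).
  rewrite (herm_dbgv_l k u k D O Hu); auto. unfold mm; ring.
  destruct k; auto.
Qed.


Definition Qk k := forall i, (i <= k)%nat -> Dbar i /\ Orth i.

Lemma orth_rev k u i : Orth k -> U u -> (i < k)%nat -> herm N (gv k u) (gv i u) = 0.
Proof. intros O Hu Hi. rewrite <- herm_conj, (O u Hu i Hi). apply Cconj_0. Qed.

Lemma DbE_val k u j : eval (DbE (S k) j) u = (- (nn (S k) u / nn k u)) * gv k u j.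
Proof. unfold DbE; cbn [eval]. rewrite !eval_H. reflexivity. Qed.

Lemma ok_DbE k u j : U u -> (k <= K)%nat -> (j < N)%nat -> ok (DbE k j) u.
Proof.
  intros Hu Hk Hj. destruct k as [|k']; cbn [ok DbE]; auto.
  repeat split.
  - apply (ok_H_le K); auto.
  - apply (ok_H_le K); auto; lia.
  - apply (nz_H_lt K); auto.
  - apply ok_E; auto. apply (ok_H_le K); auto; lia.
Qed.

Lemma ddb_val k u j : (S k <= K)%nat -> Qk k -> U u -> (j < N)%nat ->
  ddb k u j = match k with O => 0 | S k' =>
    (- (mm k u / nn k' u)) * gv k' u j + (- (nn k u / nn k' u)) * gv k u j end.
Proof.
  intros Hk Q Hu Hj. unfold ddb.
  assert (okE : ok (E k j) u) by (apply ok_E; auto; apply (ok_H_le K); auto; lia).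
  rewrite <- dz_dzb by exact okE.
  rewrite (dz_congr (dzb (E k j)) (DbE k j) u).
  2: { intros w Hw. apply (proj1 (Q k (le_n k))); auto. }
  2: exact Hu.
  2: apply ok_dzb; auto.
  2: apply ok_DbE; auto; lia.
  destruct k as [|k']. reflexivity.
  destruct (Q (S k') (le_n _)) as [D1 O1].
  destruct (Q k' ltac:(lia)) as [D0 O0].
  unfold DbE; cbn [dz eval].
  rewrite (dH (S k') u D1 O1 Hu), (dH k' u D0 O0 Hu), !eval_H.
  change (eval (dz (E k' j)) u) with (dgv k' u j). rewrite dgv_eq.
  change (eval (E k' j) u) with (gv k' u j).
  assert (nn k' u <> 0) by (rewrite <- eval_H; apply (nz_H_lt K); auto; lia).
  field. auto.
Qed.

Lemma herm_gv_dbgv k u : Qk k -> U u -> herm N (gv k u) (dbgv k u) = 0.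
Proof.
  intros Q Hu. destruct (Q k (le_n k)) as [D O].
  destruct k as [|k'].
  - rewrite (herm_ext N _ (gv 0 u) _ (fun _ => 0)). apply herm_zeror. auto.
    intros; apply (dbgv_val 0); auto.
  - rewrite (herm_ext N _ (gv (S k') u) _ (fun i => (- (nn (S k') u / nn k' u)) * gv k' u i)).
    rewrite herm_scalr, (orth_rev (S k') u k'); auto. ring.
    auto. intros; apply (dbgv_val (S k')); auto.
Qed.

Lemma herm_gv_ddb k u : (S k <= K)%nat -> Qk k -> U u ->
  herm N (gv k u) (ddb k u) = match k with O => 0 | S k' => (- (nn k u / nn k' u)) * nn k u end.
Proof.
  intros Hk Q Hu. destruct (Q k (le_n k)) as [D O].
  destruct k as [|k'].
  - rewrite (herm_ext N _ (gv 0 u) _ (fun _ => 0)). apply herm_zeror. auto.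
    intros; apply (ddb_val 0); auto.
  - rewrite (herm_ext N _ (gv (S k') u) _ (fun i => (- (mm (S k') u / nn k' u)) * gv k' u i + (- (nn (S k') u / nn k' u)) * gv (S k') u i)).
    rewrite herm_addr, !herm_scalr, (orth_rev (S k') u k'); auto. fold (nn (S k') u). ring.
    auto. intros; apply (ddb_val (S k')); auto.
Qed.

Lemma nn_S k u : nn k u <> 0 -> nn (S k) u = herm N (dgv k u) (dgv k u) - mm k u * Cconj (mm k u) / nn k u.
Proof.
  intros Hn. unfold nn at 1.
  rewrite (herm_ext N _ (fun i => dgv k u i + (- (mm k u / nn k u)) * gv k u i) _ (fun i => dgv k u i + (- (mm k u / nn k u)) * gv k u i)).
  2,3: intros; apply gv_S.
  rewrite !herm_addl, !herm_addr, !herm_scall, !herm_scalr.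
  rewrite <- (herm_conj N (gv k u) (dgv k u)). fold (mm k u) (nn k u).
  rewrite Copp_conj, Cdiv_conj, nn_real by auto. field. auto.
Qed.

Lemma dbgv_S k u j : nn k u <> 0 -> eval (dzb (E (S k) j)) u =
  ddb k u j + - (dbgv k u j * (mm k u / nn k u) + gv k u j *
    ((herm N (dgv k u) (dgv k u) + herm N (gv k u) (ddb k u)) / nn k u
     - mm k u * (Cconj (mm k u) + herm N (gv k u) (dbgv k u)) / (nn k u * nn k u))).
Proof.
  intros Hn.
  change (eval (dzb (E (S k) j)) u) with
    (eval (dzb (Add (dz (E k j)) (Opp (Mul (E k j) (Mul (M k) (Inv (H k))))))) u).
  cbn [dzb eval]. rewrite !dzb_hermE, !eval_hermE.
  fold (gv k u) (dgv k u) (dbgv k u) (ddb k u). fold (nn k u) (mm k u).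
  rewrite <- (herm_conj N (gv k u) (dgv k u)). fold (mm k u).
  change (eval (dzb (dz (E k j))) u) with (ddb k u j).
  change (eval (dzb (E k j)) u) with (dbgv k u j).
  change (eval (E k j) u) with (gv k u j).
  field. auto.
Qed.

Lemma Dbar_S k : (S k <= K)%nat -> Qk k -> Dbar (S k).
Proof.
  intros Hk Q u Hu j Hj.
  destruct (Q k (le_n k)) as [D O].
  assert (Hn : nn k u <> 0) by (rewrite <- eval_H; apply (nz_H_lt K); auto).
  rewrite DbE_val, dbgv_S by auto.
  rewrite (herm_gv_dbgv k u Q Hu), (herm_gv_ddb k u Hk Q Hu), (ddb_val k u j Hk Q Hu Hj), (dbgv_val k u j D Hu Hj).
  assert (Hd : herm N (dgv k u) (dgv k u) = nn (S k) u + mm k u * Cconj (mm k u) / nn k u)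
    by (rewrite nn_S by auto; field; auto).
  rewrite Hd.
  destruct k as [|k'].
  - field. auto.
  - assert (nn k' u <> 0) by (rewrite <- eval_H; apply (nz_H_lt K); auto; lia).
    field. auto.
Qed.

Lemma Orth_S k : (S k <= K)%nat -> Qk k -> Orth (S k).
Proof.
  intros Hk Q u Hu i Hi.
  destruct (Q k (le_n k)) as [D O].
  assert (Hn : nn k u <> 0) by (rewrite <- eval_H; apply (nz_H_lt K); auto).
  rewrite (herm_ext N _ (gv i u) _ (fun j => dgv k u j + (- (mm k u / nn k u)) * gv k u j)).
  2: auto. 2: intros; apply gv_S.
  rewrite herm_addr, herm_scalr.
  destruct (Nat.eq_dec i k) as [->|Hik].
  - fold (mm k u) (nn k u). field. auto.
  - assert (Hi' : (i < k)%nat) by lia.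
    rewrite (O u Hu i Hi').
    destruct (Q i ltac:(lia)) as [Di Oi].
    assert (Hz : eval (dz (hermE N (E i) (E k))) u = eval (dz (Cst 0)) u).
    { apply dz_congr.
      + intros w Hw. rewrite eval_hermE. apply (O w Hw i Hi').
      + exact Hu.
      + apply ok_hermE. intros j Hj. split; apply ok_E; auto; apply (ok_H_le K); auto; lia.
      + exact I. }
    rewrite dz_hermE in Hz. fold (dbgv i u) (gv k u) (gv i u) (dgv k u) in Hz.
    rewrite (herm_dbgv_l i u k Di O Hu) in Hz; try lia; auto.
    2: destruct i; lia.
    simpl in Hz. rewrite Cplus_0_l in Hz. rewrite Hz. ring.
Qed.

Lemma Q_all k : (k <= K)%nat -> Qk k.
Proof.
  induction k; intros Hk i Hi.
  - assert (i = 0)%nat by lia. subst. split.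
    + intros u Hu j Hj. unfold DbE. simpl. apply E0hol.
    + intros u Hu i Hi'. lia.
  - destruct (Nat.eq_dec i (S k)) as [->|Hne].
    + split. apply Dbar_S; auto. apply IHk; lia. apply Orth_S; auto. apply IHk; lia.
    + apply IHk; lia.
Qed.


Hypothesis HK : K = (N - 1)%nat.
Variable alpha : nat -> R.

Definition projE k i j := Mul (Mul (E k i) (cj (E k j))) (Inv (H k)).
Definition BP i j := csumE (N - 1) (fun k => Mul (Cst (RtoC (alpha k))) (projE k i j)).

Definition Amat k u i j := gv (S k) u i * Cconj (gv k u j) / nn k u.
Definition Aprev k u i j : C := match k with O => RtoC 0 | S k' => Amat k' u i j end.

Lemma nn_nz k u : U u -> (k < K)%nat -> nn k u <> 0.
Proof. intros. rewrite <- eval_H. apply (nz_H_lt K); auto. Qed.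

Lemma dproj k u i j : (S k <= K)%nat -> U u -> (i < N)%nat -> (j < N)%nat ->
  eval (dz (projE k i j)) u = Amat k u i j - Aprev k u i j.
Proof.
  intros Hk Hu Hi Hj. destruct (Q_all k ltac:(lia) k (le_n k)) as [D O].
  assert (Hn : nn k u <> 0) by (apply nn_nz; auto).
  unfold projE; cbn [dz eval]. rewrite dz_cj, (dH k u D O Hu), eval_H, eval_cj.
  change (eval (dz (E k i)) u) with (dgv k u i). rewrite dgv_eq.
  change (eval (dzb (E k j)) u) with (dbgv k u j). rewrite (dbgv_val k u j D Hu Hj).
  change (eval (E k i) u) with (gv k u i). change (eval (E k j) u) with (gv k u j).
  unfold Aprev, Amat.
  destruct k as [|k'].
  - rewrite Cconj_0. field. auto.
  - assert (nn k' u <> 0) by (apply nn_nz; auto; lia).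
    rewrite Cmult_conj, Copp_conj, Cdiv_conj, !nn_real by auto. field. auto.
Qed.

Lemma orth_any a b u : (a <= K)%nat -> (b <= K)%nat -> a <> b -> U u -> herm N (gv a u) (gv b u) = 0.
Proof.
  intros Ha Hb Hab Hu. destruct (Nat.lt_ge_cases a b) as [Hlt|Hge].
  - exact (proj2 (Q_all b Hb b (le_n b)) u Hu a Hlt).
  - apply (orth_rev a u b); auto. exact (proj2 (Q_all a Ha a (le_n a))). lia.
Qed.

Lemma trmul_AA a b u : (S a <= K)%nat -> (S b <= K)%nat -> U u -> trmul N (Amat a u) (Amat b u) = 0.
Proof.
  intros Ha Hb Hu.
  assert (na : nn a u <> 0) by (apply nn_nz; auto).
  assert (nb : nn b u <> 0) by (apply nn_nz; auto).
  unfold trmul.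
  transitivity (/ (nn a u * nn b u) * (herm N (gv b u) (gv (S a) u) * herm N (gv a u) (gv (S b) u))).
  { unfold herm. rewrite csum_mult, <- csum_scal. apply csum_ext; intros.
    rewrite <- csum_scal. apply csum_ext; intros. unfold Amat. field. auto. }
  destruct (Nat.eq_dec b (S a)) as [E1|E1].
  - rewrite (orth_any a (S b) u); try lia; auto. ring.
  - rewrite (orth_any b (S a) u); try lia; auto. ring.
Qed.

Lemma trmul_AP a l u : (S a <= K)%nat -> (l <= K - 1)%nat -> U u -> trmul N (Amat a u) (Aprev l u) = 0.
Proof.
  intros. destruct l; unfold Aprev. apply trmul_zero_r. apply trmul_AA; auto; lia.
Qed.
Lemma trmul_PA a l u : (a <= K - 1)%nat -> (S l <= K)%nat -> U u -> trmul N (Aprev a u) (Amat l u) = 0.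
Proof.
  intros. destruct a; unfold Aprev. apply trmul_zero_l. apply trmul_AA; auto; lia.
Qed.
Lemma trmul_PP a l u : (a <= K - 1)%nat -> (l <= K - 1)%nat -> U u -> trmul N (Aprev a u) (Aprev l u) = 0.
Proof.
  intros. destruct a; unfold Aprev. apply trmul_zero_l. destruct l. apply trmul_zero_r. apply trmul_AA; auto; lia.
Qed.

Lemma eval_dz_BP u i j : U u -> (i < N)%nat -> (j < N)%nat ->
  eval (dz (BP i j)) u = csum (N - 1) (fun k => RtoC (alpha k) * (Amat k u i j - Aprev k u i j)).
Proof.
  intros Hu Hi Hj. unfold BP. rewrite dz_csumE. apply csum_ext; intros k Hk.
  cbn [dz eval]. rewrite dproj; auto. ring. lia.
Qed.

Lemma trace_dz u : U u -> trmul N (fun i j => eval (dz (BP i j)) u) (fun i j => eval (dz (BP i j)) u) = 0.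
Proof.
  intros Hu.
  rewrite (trmul_ext N _ (fun i j => csum (N - 1) (fun k => RtoC (alpha k) * (Amat k u i j - Aprev k u i j)))
                     _ (fun i j => csum (N - 1) (fun k => RtoC (alpha k) * (Amat k u i j - Aprev k u i j)))).
  2,3: intros; apply eval_dz_BP; auto.
  rewrite trmul_sum. transitivity (csum (N - 1) (fun _ => 0)); [| apply csum_zero].
  apply csum_ext; intros k Hk. transitivity (csum (N - 1) (fun _ => 0)); [| apply csum_zero].
  apply csum_ext; intros l Hl.
  rewrite trmul_lin.
  rewrite trmul_AA, trmul_AP, trmul_PA, trmul_PP; try lia; auto. ring.
Qed.

Lemma RtoC_conj (r : R) : Cconj (RtoC r) = RtoC r.
Proof. apply injective_projections; simpl; ring. Qed.

Lemma ok_BP u i j : U u -> (i < N)%nat -> (j < N)%nat -> ok (BP i j) u.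
Proof.
  intros Hu Hi Hj. apply ok_csumE. intros k Hk. unfold projE. cbn [ok].
  assert (ok (H k) u) by (apply (ok_H_le K); auto; lia).
  repeat split; auto using ok_E.
  apply ok_cj, ok_E; auto.
  apply (nz_H_lt K); auto; lia.
Qed.

Lemma BP_conj u i j : Cconj (eval (BP i j) u) = eval (BP j i) u.
Proof.
  unfold BP. rewrite !eval_csumE, csum_conj. apply csum_ext; intros k Hk.
  unfold projE; cbn [eval]. rewrite !eval_cj, !Cmult_conj, Cinv_conj', !eval_H, nn_real, RtoC_conj, Cconj_conj.
  ring.
Qed.

Lemma dzb_BP u i j : U u -> (i < N)%nat -> (j < N)%nat ->
  eval (dzb (BP i j)) u = Cconj (eval (dz (BP j i)) u).
Proof.
  intros Hu Hi Hj. rewrite <- (Cconj_conj (eval (dzb (BP i j)) u)), <- dz_cj. f_equal.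
  apply dz_congr; auto.
  - intros w Hw. rewrite eval_cj. apply BP_conj.
  - apply ok_cj, ok_BP; auto.
  - apply ok_BP; auto.
Qed.

Lemma trace_dzb u : U u -> trmul N (fun i j => eval (dzb (BP i j)) u) (fun i j => eval (dzb (BP i j)) u) = 0.
Proof.
  intros Hu.
  rewrite (trmul_ext N _ (fun i j => Cconj (eval (dz (BP j i)) u)) _ (fun i j => Cconj (eval (dz (BP j i)) u))).
  2,3: intros; apply dzb_BP; auto.
  rewrite (trmul_conj N (fun i j => eval (dz (BP i j)) u)). rewrite trace_dz; auto. apply Cconj_0.
Qed.

End Alg.

Fixpoint powE (m : nat) : ex := match m with O => Cst 1 | S k => Mul Zv (powE k) end.
Lemma eval_powE m u : eval (powE m) u = cpow u m.
Proof. induction m; simpl; auto. rewrite IHm; auto. Qed.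
Lemma dzb_powE m u : eval (dzb (powE m)) u = 0.
Proof. induction m; simpl; auto. rewrite IHm. ring. Qed.
Lemma ok_powE m u : ok (powE m) u.
Proof. induction m; simpl; auto. Qed.

Section Link.
Variable N : nat.
Hypothesis HN : (1 <= N)%nat.
Variable f : vfun.
Variable E0 : nat -> ex.
Hypothesis Hf : forall w j, (j < N)%nat -> f w j = eval (E0 j) w.

Lemma link k w : ok (hermE N (E N E0 k) (E N E0 k)) w -> forall j, (j < N)%nat ->
  Pplus_iter N k f w j = eval (E N E0 k j) w.
Proof.
  revert w. induction k; intros w Hok j Hj.
  - simpl. apply Hf; auto.
  - destruct (okH_S N HN E0 k w Hok) as [Hk Hnz].
    assert (IHw : forall j, (j < N)%nat -> Pplus_iter N k f w j = eval (E N E0 k j) w) by (intros; apply IHk; auto).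
    assert (Dw : forall j, (j < N)%nat -> vwd (Pplus_iter N k f) w j = eval (dz (E N E0 k j)) w).
    { intros j' Hj'. unfold vwd. apply wd_ext.
      - eapply lineok_imp; [| apply (ok_lineok _ _ Hk)]. intros w' Hw'. apply IHk; auto.
      - apply ok_E; auto. }
    cbn [Pplus_iter]. unfold Defs.Pplus. cbv beta.
    rewrite IHw, Dw by auto.
    rewrite (herm_ext N (Pplus_iter N k f w) (fun i => eval (E N E0 k i) w)
                      (vwd (Pplus_iter N k f) w) (fun i => eval (dz (E N E0 k i)) w)) by auto.
    rewrite (herm_ext N (Pplus_iter N k f w) (fun i => eval (E N E0 k i) w)
                      (Pplus_iter N k f w) (fun i => eval (E N E0 k i) w)) by auto.
    cbn [E eval]. rewrite !eval_hermE. unfold Cdiv. ring.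
Qed.

Lemma link_bigP alpha w i j : ok (hermE N (E N E0 (N - 1)) (E N E0 (N - 1))) w ->
  (i < N)%nat -> (j < N)%nat -> bigP N alpha f w i j = eval (BP N E0 alpha i j) w.
Proof.
  intros Hok Hi Hj. unfold bigP, BP. rewrite eval_csumE. apply csum_ext; intros k Hk.
  assert (Hk' : ok (hermE N (E N E0 k) (E N E0 k)) w) by (apply (ok_H_le N HN E0 (N - 1)); auto; lia).
  unfold proj, projE. cbv zeta. cbn [eval]. rewrite eval_cj, eval_hermE.
  rewrite (link k w Hk' i Hi), (link k w Hk' j Hj).
  rewrite (herm_ext N (Pplus_iter N k f w) (fun i => eval (E N E0 k i) w)
                    (Pplus_iter N k f w) (fun i => eval (E N E0 k i) w)) by (intros; apply link; auto).
  unfold Cdiv. reflexivity.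
Qed.

End Link.

Theorem mainTheorem1 (N : nat) (f : vfun) (alpha : nat -> R) (z : C) :
  (2 <= N)%nat ->
  polynomial_components N f ->
  lin_indep_components N f ->
  (forall k, (k <= N - 1)%nat -> herm N (Pplus_iter N k f z) (Pplus_iter N k f z) <> 0) ->
  trmul N (mwd (bigP N alpha f) z) (mwd (bigP N alpha f) z) = 0 /\
  trmul N (mwdbar (bigP N alpha f) z) (mwdbar (bigP N alpha f) z) = 0.
Proof.
  intros HN2 [D [c Hc]] _ Hnz.
  assert (HN : (1 <= N)%nat) by lia.
  set (E0 := fun j => csumE (S D) (fun m => Mul (Cst (c j m)) (powE m))).
  assert (E0ok : forall j u, ok (E0 j) u).
  { intros. apply ok_csumE. intros. simpl. split; auto. apply ok_powE. }
  assert (E0hol : forall j u, eval (dzb (E0 j)) u = 0).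
  { intros. unfold E0. rewrite dzb_csumE. transitivity (csum (S D) (fun _ => 0)); [| apply csum_zero].
    apply csum_ext; intros. simpl. rewrite dzb_powE. ring. }
  assert (Hf : forall w j, (j < N)%nat -> f w j = eval (E0 j) w).
  { intros. rewrite Hc by auto. unfold E0. rewrite eval_csumE. apply csum_ext; intros. simpl.
    rewrite eval_powE. reflexivity. }
  assert (HU : forall k, (k <= N - 1)%nat -> ok (hermE N (E N E0 k) (E N E0 k)) z).
  { induction k; intros Hk.
    - apply ok_hermE. intros; split; apply E0ok.
    - apply ok_H_S; auto. apply IHk; lia.
      rewrite eval_hermE.
      rewrite <- (herm_ext N (Pplus_iter N k f z) _ (Pplus_iter N k f z)).
      apply Hnz; lia.
      all: intros; apply (link N HN f E0 Hf); auto; apply IHk; lia. }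
  assert (Hu := HU (N - 1)%nat (le_n _)).
  assert (Hl : lineok (fun w => forall i j, (i < N)%nat -> (j < N)%nat -> bigP N alpha f w i j = eval (BP N E0 alpha i j) w) z).
  { eapply lineok_imp; [| apply (ok_lineok _ _ Hu)]. intros w Hw i j Hi Hj.
    apply link_bigP; auto. }
  split.
  - rewrite (trmul_ext N _ (fun i j => eval (dz (BP N E0 alpha i j)) z) _ (fun i j => eval (dz (BP N E0 alpha i j)) z)).
    + eapply trace_dz; eauto.
    + intros i j Hi Hj. unfold mwd. apply wd_ext.
      * eapply lineok_imp; [| exact Hl]. intros w Hw. apply Hw; auto.
      * eapply ok_BP; eauto.
    + intros i j Hi Hj. unfold mwd. apply wd_ext.
      * eapply lineok_imp; [| exact Hl]. intros w Hw. apply Hw; auto.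
      * eapply ok_BP; eauto.
  - rewrite (trmul_ext N _ (fun i j => eval (dzb (BP N E0 alpha i j)) z) _ (fun i j => eval (dzb (BP N E0 alpha i j)) z)).
    + eapply trace_dzb; eauto.
    + intros i j Hi Hj. unfold mwdbar. apply wdbar_ext.
      * eapply lineok_imp; [| exact Hl]. intros w Hw. apply Hw; auto.
      * eapply ok_BP; eauto.
    + intros i j Hi Hj. unfold mwdbar. apply wdbar_ext.
      * eapply lineok_imp; [| exact Hl]. intros w Hw. apply Hw; auto.
      * eapply ok_BP; eauto.
Qed.
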